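(* For any state $\rho$ of $A$ and any state $\eta$ of $R$, $$H_{\mathcal{G}(\eta)}(\rho)=H_\eta(\mathcal{G}(\rho))=H_{\mathcal{G}(\eta)}(\mathcal{G}(\rho))=-\log\|\mathcal{G}(\eta)\|_\infty .$$
   Context: $G$ is a compact group with normalized Haar measure $dg$; finite-dimensional systems $A,R$ carry continuous unitary representations $U_A,U_R$. On a single system $\mathcal{G}(M)=\int dg\,U(g)MU(g)^\dagger$; on $RA$, $\mathcal{G}(M)=\int dg\,(U_R(g)\otimes U_A(g))M(U_R(g)\otimes U_A(g))^\dagger$. $H_{\min}(R|A)_\Omega=-\log_2\inf_{X\ge0}\{\mathrm{tr}[X]:\mathbb{1}_R\otimes X\ge\Omega_{RA}\}$, and $H_\eta(\tau):=H_{\min}(R|A)_{\mathcal{G}(\eta\otimes\tau)}$. $\|\cdot\|_\infty$ is the operator norm; logarithms base 2. *)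

(* Defs.v *)
From HB Require Import structures.
From mathcomp Require Import all_boot all_order all_algebra.
From mathcomp Require Import all_classical all_reals all_analysis.
From mathcomp Require Import complex mxtens.
Set Implicit Arguments. Unset Strict Implicit. Unset Printing Implicit Defensive.
Import Order.TTheory GRing.Theory Num.Theory.
Import numFieldNormedType.Exports.
Local Open Scope ring_scope.
Local Open Scope classical_set_scope.
Local Open Scope sesquilinear_scope.
Local Open Scope complex_scope.

Section QDefs.
Variable R : realType.
Local Notation C := R[i].

(* Loewner order: M >= 0 iff v^dagger M v >= 0 for all v (over C, 0 <= z
   means z is real and nonnegative; this also forces M to be Hermitian). *)
Definition psd n (M : 'M[C]_n) : Prop :=
  forall v : 'cV[C]_n, 0 <= (v ^t* *m M *m v) 0 0.

Definition is_state n (rho : 'M[C]_n) : Prop := psd rho /\ \tr rho = 1.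

Definition vnorm n (v : 'cV[C]_n) : R :=
  Num.sqrt (\sum_i complex.Re (`|v i 0| ^+ 2)).

Definition opnorm n (M : 'M[C]_n) : R :=
  sup [set vnorm (M *m v) | v in [set v : 'cV[C]_n | vnorm v = 1]].

Definition log2 (x : R) : R := ln x / ln 2.

(* conditional min-entropy H_min(R|A)_Omega, Omega on R (x) A (R first) *)
Definition Hmin nR nA (Omega : 'M[C]_(nR * nA)) : R :=
  - log2 (inf [set complex.Re (\tr X) |
      X in [set X : 'M[C]_nA | psd X /\ psd ((1%:M : 'M[C]_nR) *t X - Omega)]]).
End QDefs.

Section GroupDefs.
Variables (R : realType) (G : ptopologicalType).
Local Notation C := R[i].

Definition borel_G : measurableType _ := g_sigma_algebraType (@open G).

Record compact_group (mul : G -> G -> G) (inv : G -> G) (one : G) : Prop := {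
  cg_mulA : forall x y z, mul x (mul y z) = mul (mul x y) z;
  cg_mul1 : forall x, mul one x = x;
  cg_mulV : forall x, mul (inv x) x = one;
  cg_mul_cont : continuous (fun p : G * G => mul p.1 p.2);
  cg_inv_cont : continuous inv;
  cg_hausdorff : hausdorff_space G;
  cg_compact : compact [set: G] }.

Definition haar (mul : G -> G -> G) (mu : probability borel_G R) : Prop :=
  forall (g : G) (A : set borel_G), measurable A ->
    mu [set mul g x | x in A] = mu A.

Definition cont_unitary_rep n (mul : G -> G -> G) (one : G)
    (U : G -> 'M[C]_n) : Prop :=
  [/\ forall g h, U (mul g h) = U g *m U h,
      U one = 1%:M,
      forall g, U g \is unitarymx &
      forall i j, continuous (fun g => complex.Re (U g i j)) /\
                  continuous (fun g => complex.Im (U g i j))].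

Definition twirl n (mu : probability borel_G R) (U : G -> 'M[C]_n)
    (M : 'M[C]_n) : 'M[C]_n :=
  \matrix_(i, j)
    ((Rintegral mu setT (fun g : borel_G => complex.Re ((U g *m M *m (U g) ^t*) i j)))%:C
     + 'i * (Rintegral mu setT
               (fun g : borel_G => complex.Im ((U g *m M *m (U g) ^t*) i j)))%:C).

Definition twirlRA nR nA (mu : probability borel_G R) (UR : G -> 'M[C]_nR)
    (UA : G -> 'M[C]_nA) : 'M[C]_(nR * nA) -> 'M[C]_(nR * nA) :=
  twirl mu (fun g => UR g *t UA g).

Definition Heta nR nA (mu : probability borel_G R) (UR : G -> 'M[C]_nR)
    (UA : G -> 'M[C]_nA) (eta : 'M[C]_nR) (tau : 'M[C]_nA) : R :=
  Hmin (twirlRA mu UR UA (eta *t tau)).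
End GroupDefs.

(* Main.v *)
Require Import Defs.
From HB Require Import structures.
From mathcomp Require Import all_boot all_order all_algebra.
From mathcomp Require Import all_classical all_reals all_analysis.
From mathcomp Require Import complex mxtens.
From mathcomp Require Import measurable_realfun.
From mathcomp Require Import ring lra.
Import Order.TTheory GRing.Theory Num.Theory.
Import numFieldNormedType.Exports.
Set Implicit Arguments. Unset Strict Implicit. Unset Printing Implicit Defensive.
Local Open Scope ring_scope.
Local Open Scope classical_set_scope.
Local Open Scope sesquilinear_scope.
Local Open Scope complex_scope.

Section CX.
Variable R : realType.
Implicit Types x y : R[i].
Lemma cReD x y : complex.Re (x + y) = complex.Re x + complex.Re y.
Proof. by case: x => ? ?; case: y => ? ?. Qed.
Lemma cImD x y : complex.Im (x + y) = complex.Im x + complex.Im y.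
Proof. by case: x => ? ?; case: y => ? ?. Qed.
Lemma cReM x y : complex.Re (x * y) = complex.Re x * complex.Re y - complex.Im x * complex.Im y.
Proof. by case: x => ? ?; case: y => ? ?. Qed.
Lemma cImM x y : complex.Im (x * y) = complex.Re x * complex.Im y + complex.Im x * complex.Re y.
Proof. by case: x => ? ?; case: y => ? ?. Qed.
Lemma cRe_conj x : complex.Re (x^*)%R = complex.Re x.
Proof. by case: x => ? ?. Qed.
Lemma cIm_conj x : complex.Im (x^*)%R = - complex.Im x.
Proof. by case: x => ? ?. Qed.
Lemma cRe0 : complex.Re (0 : R[i]) = 0. Proof. by []. Qed.
Lemma cIm0 : complex.Im (0 : R[i]) = 0. Proof. by []. Qed.
Lemma cRe_sum (I : Type) (r : seq I) (P : pred I) (F : I -> R[i]) :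
  complex.Re (\sum_(i <- r | P i) F i) = \sum_(i <- r | P i) complex.Re (F i).
Proof. by elim/big_rec2: _ => // i a b _ <-; rewrite cReD. Qed.
Lemma cIm_sum (I : Type) (r : seq I) (P : pred I) (F : I -> R[i]) :
  complex.Im (\sum_(i <- r | P i) F i) = \sum_(i <- r | P i) complex.Im (F i).
Proof. by elim/big_rec2: _ => // i a b _ <-; rewrite cImD. Qed.
Lemma complex_ext x y : complex.Re x = complex.Re y -> complex.Im x = complex.Im y -> x = y.
Proof. by case: x => ? ?; case: y => ? ? /= -> ->. Qed.
End CX.
Section Integ.
Variables (R : realType) (G : ptopologicalType) (mul : G -> G -> G) (inv : G -> G) (one : G).
Variable mu : probability (borel_G G) R.
Hypothesis CG : compact_group mul inv one.
Hypothesis HA : haar mul mu.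

Lemma cont_meas (f : G -> R) : continuous f ->
  measurable_fun (setT : set (borel_G G)) f.
Proof.
move=> /continuousP cf.
apply: (measurability _ (measurable_realfun.RGenOpens.measurableE R)).
move=> _ [_ [a [b ->]] <-].
rewrite setTI; apply: sub_sigma_algebra; apply: cf; exact: interval_open.
Qed.

Lemma cont_int (f : G -> R) : continuous f ->
  mu.-integrable setT (EFin \o f).
Proof.
move=> cf; apply: measurable_bounded_integrable => //.
- by apply: (le_lt_trans (probability_le1 mu measurableT)); exact: ltry.
- exact: cont_meas.
have := compact_bounded (continuous_compact (continuous_subspaceT cf) (cg_compact CG)).
rewrite /= /bounded_near; apply: filterS => M HM x _.
by apply: HM; exists x.
Qed.

Lemma mulgV g : mul g (inv g) = one.
Proof.
have A := cg_mulA CG; have L := cg_mul1 CG; have V := cg_mulV CG.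
rewrite -[mul g (inv g)]L -(V (inv g)) -A (A (inv g) g) V L V //.
Qed.

Lemma mul_cont g : continuous (mul g).
Proof.
move=> x.
have -> : mul g = (fun p : G * G => mul p.1 p.2) \o (fun h => (g, h)) by [].
apply: continuous_comp; last exact: (cg_mul_cont CG).
by apply: cvg_pair; [exact: cvg_cst | exact: cvg_id].
Qed.

Lemma mul_meas g : measurable_fun (setT : set (borel_G G)) (mul g : borel_G G -> borel_G G).
Proof.
apply: (@measurability _ _ (borel_G G) (borel_G G) setT (mul g) (@open G)) => //.
move=> _ [A oA <-]; rewrite setTI; apply: sub_sigma_algebra.
exact: ((continuousP (mul g)).1 (@mul_cont g) A oA).
Qed.

Lemma Rint_inv g (f : G -> R) : continuous f ->
  Rintegral mu setT (fun h => f (mul g h)) = Rintegral mu setT f.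
Proof.
move=> cf; rewrite /Rintegral; congr fine.
have cfg : continuous (f \o mul g).
  by move=> x; apply: continuous_comp; [exact: mul_cont | exact: cf].
have mf : measurable_fun (setT : set (borel_G G)) (EFin \o f : borel_G G -> \bar R).
  by apply/measurable_EFinP; exact: cont_meas.
have intf : mu.-integrable (mul g @^-1` (setT : set (borel_G G))) ((EFin \o f : borel_G G -> \bar R) \o mul g).
  exact: (cont_int cfg).
have E := @integral_pushforward _ _ _ _ _ _ (mul_meas g) mu setT (EFin \o f) mf intf measurableT.
apply: eq_trans (esym E) _.
apply: eq_measure_integral; first exact: mul_meas.
move=> H0 A mA _ /=.
rewrite /pushforward.
have -> : mul g @^-1` A = [set mul (inv g) x | x in A].
  apply/seteqP; split => x /=.
  - move=> Ax; exists (mul g x) => //.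
    by rewrite (cg_mulA CG) (cg_mulV CG) (cg_mul1 CG).
  - by move=> [y Ay <-]; rewrite (cg_mulA CG) mulgV (cg_mul1 CG).
by rewrite HA.
Qed.

End Integ.


Section Cont.
Variables (R : realType) (T : topologicalType).
Lemma contD (f g : T -> R) : continuous f -> continuous g -> continuous (fun x => f x + g x).
Proof. by move=> cf cg x; exact: (continuousD (cf x) (cg x)). Qed.
Lemma contM (f g : T -> R) : continuous f -> continuous g -> continuous (fun x => f x * g x).
Proof. by move=> cf cg x; exact: (continuousM (cf x) (cg x)). Qed.
Lemma contN (f : T -> R) : continuous f -> continuous (fun x => - f x).
Proof. by move=> cf x; exact: (continuousN (cf x)). Qed.
Lemma contB (f g : T -> R) : continuous f -> continuous g -> continuous (fun x => f x - g x).
Proof. by move=> cf cg; apply: contD => //; exact: contN. Qed.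
Lemma cont_cst (c : R) : continuous (fun _ : T => c).
Proof. by move=> x; exact: cst_continuous. Qed.

Definition cc (F : T -> R[i]) := continuous (fun g => complex.Re (F g)) /\ continuous (fun g => complex.Im (F g)).

Lemma ccD F H : cc F -> cc H -> cc (fun g => F g + H g).
Proof.
move=> [f1 f2] [h1 h2]; split.
  by under eq_fun do rewrite cReD; exact: contD.
by under eq_fun do rewrite cImD; exact: contD.
Qed.
Lemma ccM F H : cc F -> cc H -> cc (fun g => F g * H g).
Proof.
move=> [f1 f2] [h1 h2]; split.
  by under eq_fun do rewrite cReM; apply: contB; exact: contM.
by under eq_fun do rewrite cImM; apply: contD; exact: contM.
Qed.
Lemma cc_cst c : cc (fun _ => c).
Proof. by split; exact: cont_cst. Qed.
Lemma cc_conj F : cc F -> cc (fun g => (F g)^*%R).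
Proof.
move=> [f1 f2]; split.
  by under eq_fun do rewrite cRe_conj.
by under eq_fun do rewrite cIm_conj; exact: contN.
Qed.
Lemma cc_sum (I : Type) (r : seq I) (P : pred I) (F : I -> T -> R[i]) :
  (forall i, cc (F i)) -> cc (fun g => \sum_(i <- r | P i) F i g).
Proof.
move=> h; elim: r => [|a r IH].
  by under eq_fun do rewrite big_nil; exact: cc_cst.
under eq_fun do rewrite big_cons.
case: (P a) => //; exact: ccD.
Qed.
End Cont.

Section CInt.
Variables (R : realType) (G : ptopologicalType) (mul : G -> G -> G) (inv : G -> G) (one : G).
Variable mu : probability (borel_G G) R.
Hypothesis CG : compact_group mul inv one.
Hypothesis HA : haar mul mu.

Definition cint (F : G -> R[i]) : R[i] :=
  (Rintegral mu setT (fun g : borel_G G => complex.Re (F g)))%:C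
  + 'i * (Rintegral mu setT (fun g : borel_G G => complex.Im (F g)))%:C.

Lemma cint_Re F : complex.Re (cint F) = Rintegral mu setT (fun g : borel_G G => complex.Re (F g)).
Proof. by rewrite /cint cReD cReM /=; ring. Qed.
Lemma cint_Im F : complex.Im (cint F) = Rintegral mu setT (fun g : borel_G G => complex.Im (F g)).
Proof. by rewrite /cint cImD cImM /=; ring. Qed.

Lemma cintD F H : cc F -> cc H -> cint (fun g => F g + H g) = cint F + cint H.
Proof.
move=> [f1 f2] [h1 h2]; apply: complex_ext.
  rewrite cint_Re [RHS]cReD !cint_Re; under eq_Rintegral do rewrite cReD.
  by apply: RintegralD => //; [exact: (cont_int mu CG f1) | exact: (cont_int mu CG h1)].
rewrite cint_Im [RHS]cImD !cint_Im; under eq_Rintegral do rewrite cImD.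
by apply: RintegralD => //; [exact: (cont_int mu CG f2) | exact: (cont_int mu CG h2)].
Qed.

Lemma cintZ c F : cc F -> cint (fun g => c * F g) = c * cint F.
Proof.
move=> [f1 f2]; apply: complex_ext.
  rewrite cint_Re [RHS]cReM cint_Re cint_Im; under eq_Rintegral do rewrite cReM.
  rewrite RintegralB //; last 2 first.
  - exact: (cont_int mu CG (contM (@cont_cst _ _ (complex.Re c)) f1)).
  - exact: (cont_int mu CG (contM (@cont_cst _ _ (complex.Im c)) f2)).
  by rewrite !RintegralZl //; [exact: (cont_int mu CG f2) | exact: (cont_int mu CG f1)].
rewrite cint_Im [RHS]cImM cint_Re cint_Im; under eq_Rintegral do rewrite cImM.
rewrite RintegralD //; last 2 first.
- exact: (cont_int mu CG (contM (@cont_cst _ _ (complex.Re c)) f2)).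
- exact: (cont_int mu CG (contM (@cont_cst _ _ (complex.Im c)) f1)).
by rewrite !RintegralZl //; [exact: (cont_int mu CG f1) | exact: (cont_int mu CG f2)].
Qed.

Lemma cint_cst c : cint (fun _ => c) = c.
Proof.
have m1 : fine (mu setT) = 1 :> R.
  by rewrite (_ : mu setT = 1%E) //; exact: (probability_setT mu).
apply: complex_ext; rewrite ?cint_Re ?cint_Im Rintegral_cst // m1 mulr1 //.
Qed.

Lemma cint_sum (I : Type) (r : seq I) (P : pred I) (F : I -> G -> R[i]) :
  (forall i, cc (F i)) ->
  cint (fun g => \sum_(i <- r | P i) F i g) = \sum_(i <- r | P i) cint (F i).
Proof.
move=> h; elim: r => [|a r IH].
  by under eq_fun do rewrite big_nil; rewrite big_nil cint_cst.
under eq_fun do rewrite big_cons. rewrite big_cons.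
case: (P a) => //; rewrite cintD ?IH //; exact: cc_sum.
Qed.

Lemma cint_inv g F : cc F -> cint (fun h => F (mul g h)) = cint F.
Proof.
move=> [f1 f2]; apply: complex_ext; rewrite ?cint_Re ?cint_Im.
  exact: (Rint_inv CG HA g f1).
exact: (Rint_inv CG HA g f2).
Qed.

Lemma cint_ge0 F : (forall g, 0 <= F g) -> 0 <= cint F.
Proof.
move=> h.
have -> : cint F = (Rintegral mu setT (fun g : borel_G G => complex.Re (F g)))%:C.
  apply: complex_ext; rewrite ?cint_Re ?cint_Im //=.
  have -> : (fun g : borel_G G => complex.Im (F g)) = fun _ => 0.
    by apply: funext => g; have := h g; rewrite lecE => /andP[/eqP -> _].
  by rewrite Rintegral_cst // mul0r.
rewrite ler0c; apply: Rintegral_ge0 => g _.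
by have := h g; rewrite lecE => /andP[_].
Qed.
End CInt.


Lemma adj_mul (R : realType) m n p (A : 'M[R[i]]_(m,n)) (B : 'M[R[i]]_(n,p)) :
  (A *m B)^t* = B^t* *m A^t*.
Proof. by rewrite trmx_mul map_mxM. Qed.

Lemma adj_tens (R : realType) m n p q (A : 'M[R[i]]_(m,n)) (B : 'M[R[i]]_(p,q)) :
  (A *t B)^t* = A^t* *t B^t*.
Proof. by apply/matrixP=> i j; rewrite !mxE rmorphM. Qed.

Lemma adj_adj (R : realType) m n (A : 'M[R[i]]_(m,n)) : A^t*^t* = A.
Proof. by apply/matrixP=> i j; rewrite !mxE conjCK. Qed.

Section ContM.
Variables (R : realType) (T : topologicalType).
Definition ccMx m n (F : T -> 'M[R[i]]_(m,n)) := forall i j, cc (fun g => F g i j).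

Lemma ccM_cst m n (M : 'M[R[i]]_(m,n)) : ccMx (fun _ => M).
Proof. by move=> i j; exact: cc_cst. Qed.

Lemma ccM_mul m n p (F : T -> 'M[R[i]]_(m,n)) (H : T -> 'M[R[i]]_(n,p)) :
  ccMx F -> ccMx H -> ccMx (fun g => F g *m H g).
Proof.
move=> cF cH i j; under eq_fun do rewrite mxE.
by apply: cc_sum => k; apply: ccM; [exact: cF | exact: cH].
Qed.

Lemma ccM_adj m n (F : T -> 'M[R[i]]_(m,n)) : ccMx F -> ccMx (fun g => (F g)^t*).
Proof. by move=> cF i j; under eq_fun do rewrite !mxE; exact: cc_conj (cF _ _). Qed.

Lemma ccM_tens m n p q (F : T -> 'M[R[i]]_(m,n)) (H : T -> 'M[R[i]]_(p,q)) :
  ccMx F -> ccMx H -> ccMx (fun g => F g *t H g).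
Proof. by move=> cF cH i j; under eq_fun do rewrite !mxE; apply: ccM; [exact: cF | exact: cH]. Qed.
End ContM.

Section MInt.
Variables (R : realType) (G : ptopologicalType) (mul : G -> G -> G) (inv : G -> G) (one : G).
Variable mu : probability (borel_G G) R.
Hypothesis CG : compact_group mul inv one.
Hypothesis HA : haar mul mu.

Definition mint m n (F : G -> 'M[R[i]]_(m,n)) : 'M[R[i]]_(m,n) :=
  \matrix_(i, j) cint mu (fun g => F g i j).

Lemma twirlE n (U : G -> 'M[R[i]]_n) M :
  twirl mu U M = mint (fun g => U g *m M *m (U g)^t*).
Proof. by apply/matrixP => i j; rewrite !mxE. Qed.

Lemma mint_mull m n p (A : 'M[R[i]]_(m,n)) (F : G -> 'M[R[i]]_(n,p)) :
  ccMx F -> A *m mint F = mint (fun g => A *m F g).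
Proof.
move=> cF; apply/matrixP => i j; rewrite !mxE.
transitivity (\sum_k cint mu (fun g => A i k * F g k j)).
  by apply: eq_bigr => k _; rewrite mxE (cintZ mu CG _ (cF k j)).
rewrite -(cint_sum mu CG); last by move=> k; apply: ccM; [exact: cc_cst | exact: cF].
by congr cint; apply: funext => g; rewrite mxE.
Qed.

Lemma mint_mulr m n p (F : G -> 'M[R[i]]_(m,n)) (B : 'M[R[i]]_(n,p)) :
  ccMx F -> mint F *m B = mint (fun g => F g *m B).
Proof.
move=> cF; apply/matrixP => i j; rewrite !mxE.
transitivity (\sum_k cint mu (fun g => B k j * F g i k)).
  by apply: eq_bigr => k _; rewrite mxE mulrC (cintZ mu CG _ (cF i k)).
rewrite -(cint_sum mu CG); last by move=> k; apply: ccM; [exact: cc_cst | exact: cF].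
by congr cint; apply: funext => g; rewrite mxE; apply: eq_bigr => k _; rewrite mulrC.
Qed.

Lemma mint_cst m n (M : 'M[R[i]]_(m,n)) : mint (fun _ => M) = M.
Proof. by apply/matrixP => i j; rewrite !mxE (cint_cst mu). Qed.

Lemma mint_inv g m n (F : G -> 'M[R[i]]_(m,n)) :
  ccMx F -> mint (fun h => F (mul g h)) = mint F.
Proof. by move=> cF; apply/matrixP => i j; rewrite !mxE; exact: (cint_inv CG HA g (cF i j)). Qed.

Lemma mint_tensl m n p q (M : 'M[R[i]]_(m,n)) (F : G -> 'M[R[i]]_(p,q)) :
  ccMx F -> mint (fun g => M *t F g) = M *t mint F.
Proof.
move=> cF; apply/matrixP => i j; rewrite !mxE.
rewrite -(cintZ mu CG _ (cF _ _)).
by congr cint; apply: funext => g; rewrite mxE.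
Qed.

Lemma mint_tensr m n p q (F : G -> 'M[R[i]]_(m,n)) (N : 'M[R[i]]_(p,q)) :
  ccMx F -> mint (fun g => F g *t N) = mint F *t N.
Proof.
move=> cF; apply/matrixP => i j; rewrite !mxE mulrC.
rewrite -(cintZ mu CG _ (cF _ _)).
by congr cint; apply: funext => g; rewrite !mxE mulrC.
Qed.
End MInt.


Section Rep.
Variables (R : realType) (G : ptopologicalType) (mul : G -> G -> G) (inv : G -> G) (one : G).
Variable mu : probability (borel_G G) R.
Hypothesis CG : compact_group mul inv one.
Hypothesis HA : haar mul mu.

Lemma ccU n (U : G -> 'M[R[i]]_n) : cont_unitary_rep mul one U -> ccMx U.
Proof. by case=> _ _ _ hc i j; have [h1 h2] := hc i j; split. Qed.

Lemma U_adjU n (U : G -> 'M[R[i]]_n) g : cont_unitary_rep mul one U ->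
  (U g)^t* *m U g = 1%:M.
Proof. by case=> _ _ hu _; apply: mulmx1C; apply/unitarymxP; exact: hu. Qed.

Lemma ccF n (U : G -> 'M[R[i]]_n) M : cont_unitary_rep mul one U ->
  ccMx (fun g => U g *m M *m (U g)^t*).
Proof.
move=> HU; apply: ccM_mul; last exact: ccM_adj (ccU HU).
by apply: ccM_mul; [exact: ccU HU | exact: ccM_cst].
Qed.

Lemma twirl_inv n (U : G -> 'M[R[i]]_n) M g : cont_unitary_rep mul one U ->
  U g *m twirl mu U M *m (U g)^t* = twirl mu U M.
Proof.
move=> HU; rewrite !twirlE (mint_mull mu CG); last by apply: ccF.
rewrite (mint_mulr mu CG); last by apply: ccM_mul; [exact: ccM_cst | apply: ccF].

rewrite -(mint_inv CG HA g (ccF M HU)); congr mint; apply: funext => h.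
by case: HU => hm _ _ _; rewrite hm adj_mul !mulmxA.
Qed.

Lemma twirl_fix n (U : G -> 'M[R[i]]_n) M :
  (forall g, U g *m M *m (U g)^t* = M) -> twirl mu U M = M.
Proof.
move=> h; rewrite twirlE.
have -> : (fun g => U g *m M *m (U g)^t*) = fun _ => M by apply: funext => g; rewrite h.
exact: (mint_cst mu).
Qed.

Lemma twirl_psd n (U : G -> 'M[R[i]]_n) M : cont_unitary_rep mul one U ->
  psd M -> psd (twirl mu U M).
Proof.
move=> HU pM v; rewrite twirlE (mint_mull mu CG); last by apply: ccF.
rewrite (mint_mulr mu CG); last by apply: ccM_mul; [exact: ccM_cst | apply: ccF].
rewrite mxE; apply: cint_ge0 => g.
have -> : v^t* *m (U g *m M *m (U g)^t*) *m v
    = ((U g)^t* *m v)^t* *m M *m ((U g)^t* *m v).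
  by rewrite adj_mul adj_adj !mulmxA.
exact: pM.
Qed.

Lemma twirl_tr n (U : G -> 'M[R[i]]_n) M : cont_unitary_rep mul one U ->
  \tr (twirl mu U M) = \tr M.
Proof.
move=> HU; rewrite twirlE /mxtrace.
under eq_bigr do rewrite mxE.
rewrite -(cint_sum mu CG); last by move=> i; exact: ccF.
have -> : (fun g => \sum_i (U g *m M *m (U g)^t*) i i) = fun _ => \tr M.
  apply: funext => g; rewrite -/(mxtrace _) mxtrace_mulC mulmxA (U_adjU g HU) mul1mx //.
exact: (cint_cst mu).
Qed.

Lemma tw_l nR nA (UR : G -> 'M[R[i]]_nR) (UA : G -> 'M[R[i]]_nA) M N :
  cont_unitary_rep mul one UA ->
  (forall g, UR g *m M *m (UR g)^t* = M) ->
  twirlRA mu UR UA (M *t N) = M *t twirl mu UA N.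
Proof.
move=> HUA h; rewrite /twirlRA !twirlE -(mint_tensl mu CG); last exact: ccF.
congr mint; apply: funext => g.
by rewrite adj_tens !tensmx_mul h.
Qed.

Lemma tw_r nR nA (UR : G -> 'M[R[i]]_nR) (UA : G -> 'M[R[i]]_nA) M N :
  cont_unitary_rep mul one UR ->
  (forall g, UA g *m N *m (UA g)^t* = N) ->
  twirlRA mu UR UA (M *t N) = twirl mu UR M *t N.
Proof.
move=> HUR h; rewrite /twirlRA !twirlE -(mint_tensr mu CG); last exact: ccF.
congr mint; apply: funext => g.
by rewrite adj_tens !tensmx_mul h.
Qed.
End Rep.


Local Close Scope complex_scope.

Section LinAlg.
Variable R : realType.
Local Notation C := R[i].

Lemma cadjD m n (u w : 'M[C]_(m,n)) : (u + w)^t* = u^t* + w^t*.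
Proof. by apply/matrixP => i j; rewrite !mxE rmorphD. Qed.
Lemma cadjN m n (u : 'M[C]_(m,n)) : (- u)^t* = - u^t*.
Proof. by apply/matrixP => i j; rewrite !mxE rmorphN. Qed.
Lemma cadjZ m n a (u : 'M[C]_(m,n)) : (a *: u)^t* = a^* *: u^t*.
Proof. by apply/matrixP => i j; rewrite !mxE rmorphM. Qed.
Lemma adj_delta n (i : 'I_n) : (delta_mx i 0 : 'cV[C]_n)^t* = delta_mx 0 i.
Proof.
apply/matrixP => a b; rewrite !mxE.
by case: (a == 0) (b == i) => [] [] /=; rewrite ?rmorph1 ?rmorph0.
Qed.

Section Form.
Variables (n : nat) (A : 'M[C]_n).
Definition bf (u w : 'cV[C]_n) := (u^t* *m A *m w) 0 0.
Lemma bf_Dl u w x : bf (u + w) x = bf u x + bf w x.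
Proof. by rewrite /bf cadjD !mulmxDl mxE. Qed.
Lemma bf_Dr u w x : bf u (w + x) = bf u w + bf u x.
Proof. by rewrite /bf mulmxDr mxE. Qed.
Lemma bf_Zl a u w : bf (a *: u) w = a^* * bf u w.
Proof. by rewrite /bf cadjZ -!scalemxAl mxE. Qed.
Lemma bf_Zr a u w : bf u (a *: w) = a * bf u w.
Proof. by rewrite /bf -scalemxAr mxE. Qed.
Lemma bf_delta i j : bf (delta_mx i 0) (delta_mx j 0) = A i j.
Proof. by rewrite /bf adj_delta -rowE -colE !mxE. Qed.
End Form.

Lemma cjD (x y : C) : (x + y)^* = x^* + y^*. Proof. exact: rmorphD. Qed.
Lemma cjM (x y : C) : (x * y)^* = x^* * y^*. Proof. exact: rmorphM. Qed.
Lemma cjN (x : C) : (- x)^* = - x^*. Proof. exact: rmorphN. Qed.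
Lemma cjB (x y : C) : (x - y)^* = x^* - y^*. Proof. exact: rmorphB. Qed.

Definition ii : C := Complex 0 1.
Lemma ii_conj : ii^* = - ii.
Proof. by apply: complex_ext => /=; rewrite ?oppr0. Qed.
Lemma ii_neq0 : ii != 0.
Proof. by apply/eqP => /(congr1 (@complex.Im _)) /= /eqP; rewrite oner_eq0. Qed.

Lemma psd_herm n (A : 'M[C]_n) : psd A -> A^t* = A.
Proof.
move=> pA.
have re u : (bf A u u)^* = bf A u u by apply: geC0_conj; exact: pA.
apply/matrixP => i j; rewrite !mxE.
set ei : 'cV[C]_n := delta_mx i 0; set ej : 'cV[C]_n := delta_mx j 0.
have rii : (A i i)^* = A i i by have := re ei; rewrite bf_delta.
have rjj : (A j j)^* = A j j by have := re ej; rewrite bf_delta.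
have e1 := re (ei + ej).
rewrite !(bf_Dl, bf_Dr) !bf_delta !cjD rii rjj in e1.
have e2 := re (ei + ii *: ej).
rewrite !(bf_Dl, bf_Dr, bf_Zl, bf_Zr) !bf_delta !cjD !cjM rii rjj ii_conj !cjN ii_conj opprK in e2.
move: e1 e2; set x := A i j; set y := A j i; set a := A i i; set b := A j j => e1 e2.
have h1 : x^* + y^* = x + y.
  transitivity ((a + x^* + (y^* + b)) - a - b); first ring.
  by rewrite e1; ring.
have h2 : - ii * x^* + ii * y^* = ii * x - ii * y.
  transitivity ((a + - ii * x^* + (ii * y^* + ii * (- ii * b))) - a - ii * (- ii * b)); first ring.
  by rewrite e2; ring.
have key : (ii *+ 2) * y^* = (ii *+ 2) * x.
  transitivity (ii * (x^* + y^*) + (- ii * x^* + ii * y^*)); first ring.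
  by rewrite h1 h2; ring.
have nz : ii *+ 2 != 0 by rewrite mulrn_eq0 negb_or ii_neq0.
by rewrite (mulfI nz key).
Qed.


Lemma dot_ge0 k (u : 'cV[C]_k) : 0 <= (u^t* *m u) 0 0.
Proof.
rewrite mxE; apply: sumr_ge0 => i _; rewrite !mxE mulrC -normCK.
exact: exprn_ge0.
Qed.

Lemma psd_MM k n (M : 'M[C]_(k,n)) : psd (M^t* *m M).
Proof.
move=> v; have -> : v^t* *m (M^t* *m M) *m v = (M *m v)^t* *m (M *m v).
  by rewrite adj_mul !mulmxA.
exact: dot_ge0.
Qed.

Lemma diag_sqrt n (P : 'M[C]_n) (e : 'rV[C]_n) : (forall k, 0 <= e 0 k) ->
  P^t* *m diag_mx e *m P =
  (diag_mx (map_mx sqrtC e) *m P)^t* *m (diag_mx (map_mx sqrtC e) *m P).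
Proof.
move=> he; rewrite adj_mul -!mulmxA; congr (_ *m _); rewrite !mulmxA; congr (_ *m _).
rewrite tr_diag_mx map_diag_mx mulmx_diag; congr diag_mx.
apply/matrixP => i j; rewrite !mxE (ord1 i).
change (e 0 j = (sqrtC (e 0 j))^* * sqrtC (e 0 j)).
by rewrite geC0_conj ?sqrtC_ge0 // -expr2 sqrtCK.
Qed.

Lemma psd_diag n (P : 'M[C]_n) (e : 'rV[C]_n) : (forall k, 0 <= e 0 k) ->
  psd (P^t* *m diag_mx e *m P).
Proof. by move=> he; rewrite diag_sqrt //; exact: psd_MM. Qed.

Lemma psd_hermsym n (A : 'M[C]_n) : psd A -> A \is hermsymmx.
Proof. by move=> pA; apply/is_hermitianmxP; rewrite expr0 scale1r psd_herm. Qed.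

Lemma unitary_adjK n (P : 'M[C]_n) : P \is unitarymx -> P^t* *m P = 1%:M.
Proof. by move=> /unitarymxP h; apply: mulmx1C. Qed.

Lemma diag_entry n (d : 'rV[C]_n) k :
  ((delta_mx k 0 : 'cV[C]_n)^t* *m diag_mx d *m (delta_mx k 0 : 'cV[C]_n)) 0 0 = d 0 k.
Proof. by rewrite adj_delta -rowE -colE !mxE eqxx mulr1n. Qed.

Lemma spec_psd n (A : 'M[C]_n) : psd A ->
  exists (P : 'M[C]_n) (d : 'rV[C]_n), [/\ P \is unitarymx, A = P^t* *m diag_mx d *m P &
                  forall k, 0 <= d 0 k].
Proof.
move=> pA; have /hermitian_normalmx/orthomx_spectralP hA := psd_hermsym pA.
set P := spectralmx A in hA; set d := spectral_diag A in hA.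
have uP : P \is unitarymx by exact: spectral_unitarymx.
rewrite invmx_unitary // in hA.
exists P, d; split => // k.
have := pA (P^t* *m delta_mx k 0).
rewrite hA adj_mul adj_adj !mulmxA.
rewrite -(mulmxA _ P) (unitarymxP uP) mulmx1.
rewrite -(mulmxA _ P) (unitarymxP uP) mulmx1.
by rewrite diag_entry.
Qed.

Lemma psd_factor n (A : 'M[C]_n) : psd A -> exists M : 'M[C]_n, A = M^t* *m M.
Proof.
move=> /spec_psd [P [d [uP -> hd]]].
by exists (diag_mx (map_mx sqrtC d) *m P); rewrite diag_sqrt.
Qed.

Lemma psd_tens m n (A : 'M[C]_m) (B : 'M[C]_n) : psd A -> psd B -> psd (A *t B).
Proof.
move=> /psd_factor [M ->] /psd_factor [N ->].
rewrite -tensmx_mul -adj_tens; exact: psd_MM.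
Qed.
End LinAlg.


Local Open Scope complex_scope.

Section Ent.
Variable R : realType.
Local Notation C := R[i].

Lemma vnorm_dot n (v : 'cV[C]_n) : vnorm v = Num.sqrt (complex.Re ((v^t* *m v) 0 0)).
Proof.
rewrite /vnorm mxE cRe_sum; congr Num.sqrt; apply: eq_bigr => i _.
by rewrite !mxE normCK mulrC.
Qed.

Lemma Cle_Re (x y : C) : x <= y -> complex.Re x <= complex.Re y.
Proof. by rewrite lecE => /andP[]. Qed.

Lemma Cge0_real (x : C) : 0 <= x -> x = (complex.Re x)%:C.
Proof. by case: x => a b; rewrite lecE /= => /andP[/eqP -> _]. Qed.

Lemma quad_diag n (w : 'cV[C]_n) (e : 'rV[C]_n) :
  (w^t* *m diag_mx e *m w) 0 0 = \sum_k e 0 k * `|w k 0| ^+ 2.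
Proof.
rewrite mul_mx_diag mxE; apply: eq_bigr => k _.
by rewrite !mxE normCK; ring.
Qed.

Lemma dot_sum n (w : 'cV[C]_n) : (w^t* *m w) 0 0 = \sum_k `|w k 0| ^+ 2.
Proof. by rewrite mxE; apply: eq_bigr => k _; rewrite !mxE normCK mulrC. Qed.

Lemma dot_unitary n (P : 'M[C]_n) (v : 'cV[C]_n) : P \is unitarymx ->
  (P *m v)^t* *m (P *m v) = v^t* *m v.
Proof.
by move=> uP; rewrite adj_mul -mulmxA (mulmxA _ P) unitary_adjK // mul1mx.
Qed.

Lemma dot_delta n (k : 'I_n) :
  ((delta_mx k 0 : 'cV[C]_n)^t* *m (delta_mx k 0 : 'cV[C]_n)) = 1%:M.
Proof. by rewrite adj_delta mul_delta_mx; apply/matrixP => i j; rewrite !ord1 !mxE. Qed.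


Lemma Re_realM (a : R) (z : C) : complex.Re (a%:C * z) = a * complex.Re z.
Proof. by rewrite cReM /= mul0r subr0. Qed.

Section Spec.
Variables (n : nat) (P : 'M[C]_n.+1) (d : 'rV[C]_n.+1).
Hypotheses (uP : P \is unitarymx) (hd : forall k, 0 <= d 0 k).
Local Notation sig := (P^t* *m diag_mx d *m P).
Definition k0 := Order.arg_max (ord0 : 'I_n.+1) xpredT (fun k => complex.Re (d 0 k)).
Lemma k0_max k : complex.Re (d 0 k) <= complex.Re (d 0 k0).
Proof.
rewrite /k0; case: (arg_maxP (fun k => complex.Re (d 0 k)) (isT : xpredT (ord0 : 'I_n.+1))).
by move=> i _ hi; exact: hi.
Qed.
Definition cmax := complex.Re (d 0 k0).
Lemma cmax_ge0 : 0 <= cmax.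
Proof. by have := Cle_Re (hd k0). Qed.
Lemma d_le_c k : d 0 k <= cmax%:C.
Proof. by rewrite (Cge0_real (hd k)) lecR; exact: k0_max. Qed.
Lemma dk0 : d 0 k0 = cmax%:C.
Proof. exact: Cge0_real. Qed.
Definition v0 : 'cV[C]_n.+1 := P^t* *m delta_mx k0 0.
Lemma v0_dot : v0^t* *m v0 = 1%:M.
Proof.
rewrite /v0 adj_mul adj_adj !mulmxA -(mulmxA _ P) (unitarymxP uP) mulmx1.
exact: dot_delta.
Qed.
Lemma sig_v0 : sig *m v0 = cmax%:C *: v0.
Proof.
rewrite /v0 !mulmxA -(mulmxA _ P) (unitarymxP uP) mulmx1 scalemxAr -mulmxA.
congr (_ *m _); apply/matrixP => i j; rewrite mul_diag_mx !mxE (ord1 j).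
by case: eqP => [->|_]; rewrite ?mulr1 ?mulr0 ?dk0.
Qed.

Lemma norm_sig v : vnorm v = 1 -> vnorm (sig *m v) <= cmax.
Proof.
move=> hv.
have q0 : 0 <= complex.Re ((v^t* *m v) 0 0) by exact: (Cle_Re (dot_ge0 v)).
have q1 : complex.Re ((v^t* *m v) 0 0) = 1.
  by rewrite -(sqr_sqrtr q0) -vnorm_dot hv expr1n.
set w := P *m v; set z := diag_mx d *m w.
have e1 : (sig *m v)^t* *m (sig *m v) = z^t* *m z.
  have -> : sig *m v = P^t* *m z by rewrite /z /w !mulmxA.
  by apply: dot_unitary; rewrite trmxC_unitary.
have e2 : (z^t* *m z) 0 0 <= cmax%:C ^+ 2 * (v^t* *m v) 0 0.
  rewrite -(dot_unitary v uP) -/w !dot_sum mulr_sumr; apply: ler_sum => k _.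
  rewrite /z mul_diag_mx mxE normrM exprMn; apply: ler_wpM2r; first exact: exprn_ge0.
  rewrite (ger0_norm (hd k)) !expr2; apply: ler_pM => //; exact: d_le_c.
rewrite vnorm_dot e1 -[cmax]ger0_norm ?cmax_ge0 // -sqrtr_sqr ler_sqrt ?exprn_ge0 //.
  have := Cle_Re e2; rewrite -rmorphXn Re_realM q1 mulr1; exact.
exact: cmax_ge0.
Qed.

Lemma opnorm_sig : opnorm sig = cmax.
Proof.
rewrite /opnorm; set S := (X in sup X).
have inS : S cmax.
  exists v0.
    by rewrite /= vnorm_dot v0_dot mxE /= sqrtr1.
  rewrite sig_v0 vnorm_dot cadjZ -scalemxAl -scalemxAr v0_dot !mxE /=.
  rewrite (_ : cmax * (cmax * 1 - 0 * 0) - - 0 * (cmax * 0 + 0 * 1) = cmax ^+ 2); last by ring.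
  rewrite sqrtr_sqr.
  exact: ger0_norm cmax_ge0.
have ub : ubound S cmax by move=> _ [v hv <-]; exact: norm_sig.
apply/le_anti/andP; split; first exact: (ge_sup (ex_intro _ cmax inS) ub).
by apply: sup_upper_bound => //; split; [exists cmax | exists cmax].
Qed.

Lemma psd_c_sig : psd (cmax%:C *: 1%:M - sig).
Proof.
have -> : cmax%:C *: 1%:M - sig = P^t* *m diag_mx (\row_k (cmax%:C - d 0 k)) *m P.
  have -> : diag_mx (\row_k (cmax%:C - d 0 k)) = cmax%:C%:M - diag_mx d.
    by apply/matrixP => i j; rewrite !mxE mulrnBl.
  by rewrite mulmxBr mulmxBl mul_mx_scalar -scalemxAl unitary_adjK.
by apply: psd_diag => k; rewrite mxE subr_ge0; exact: d_le_c.
Qed.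
End Spec.
End Ent.


Section Hm.
Variable R : realType.
Local Notation C := R[i].

Lemma mxBE m n (A B : 'M[C]_(m,n)) i j : (A - B) i j = A i j - B i j.
Proof. by rewrite !mxE. Qed.

Lemma tens11 (a b : 'M[C]_1) : (a *t b) 0 0 = a 0 0 * b 0 0.
Proof. by rewrite mxE; move: (mxtens_unindex _) => [i j] /=; rewrite (ord1 i) (ord1 j). Qed.

Lemma quad_tens n m (v : 'cV[C]_n) (w : 'cV[C]_m) (A : 'M[C]_n) (B : 'M[C]_m) :
  ((v *t w)^t* *m (A *t B) *m (v *t w)) 0 0 = (v^t* *m A *m v) 0 0 * (w^t* *m B *m w) 0 0.
Proof. by rewrite adj_tens !tensmx_mul tens11. Qed.

Lemma psd_diag_ge0 n (Y : 'M[C]_n) k : psd Y -> 0 <= Y k k.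
Proof. by move=> pY; rewrite -(bf_delta Y); exact: pY. Qed.

Lemma psd_tr_ge0 n (Y : 'M[C]_n) : psd Y -> 0 <= \tr Y.
Proof. by move=> pY; apply: sumr_ge0 => k _; exact: psd_diag_ge0. Qed.

Lemma Hmin_tens n m (sig : 'M[C]_n.+1) (tau : 'M[C]_m) :
  psd sig -> psd tau -> \tr tau = 1 -> Hmin (sig *t tau) = - log2 (opnorm sig).
Proof.
move=> ps pt tt; have [P [d [uP es hd]]] := spec_psd ps.
rewrite /Hmin; congr (- log2 _).
rewrite es opnorm_sig //.
set c := cmax d.
set S := (X in inf X).
have inS : S c.
  exists (c%:C *: tau).
    split.
      move=> v; rewrite -scalemxAr -scalemxAl mxE; apply: mulr_ge0; last exact: pt.
      by rewrite lecR cmax_ge0.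
    have -> : 1%:M *t (c%:C *: tau) - (P^t* *m diag_mx d *m P) *t tau
              = (c%:C *: 1%:M - P^t* *m diag_mx d *m P) *t tau.
      apply/matrixP => i j; rewrite !mxE; ring.
    by apply: psd_tens => //; exact: psd_c_sig.
  by rewrite mxtraceZ tt mulr1.
have lb : lbound S c.
  move=> _ [X [pX pXX] <-].
  have pY : psd (X - c%:C *: tau).
    move=> w; have := pXX (v0 P d *t w).
    rewrite mulmxBr mulmxBl mxBE !quad_tens mulmx1 (v0_dot d uP).
    rewrite -(mulmxA _ (P^t* *m diag_mx d *m P)) (sig_v0 uP hd) -scalemxAr (v0_dot d uP).
    rewrite mulmxBr mulmxBl mxBE -scalemxAr -scalemxAl.
    have e1 : (1%:M : 'M[C]_1) 0 0 = 1 by rewrite mxE.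
    have e2 : ((c%:C *: 1%:M) : 'M[C]_1) 0 0 = c%:C by rewrite !mxE mulr1.
    have e3 : forall (M : 'M[C]_1), (c%:C *: M) 0 0 = c%:C * M 0 0 by move=> M; rewrite mxE.
    by rewrite e1 e2 e3 mul1r.
  have := psd_tr_ge0 pY; rewrite linearB /= mxtraceZ tt mulr1 subr_ge0 => h.
  exact: (Cle_Re h).
apply/le_anti/andP; split.
  exact: (ge_inf (ex_intro _ c lb) inS).
exact: (lb_le_inf (ex_intro _ c inS) lb).
Qed.
End Hm.


Local Close Scope complex_scope.
Local Close Scope classical_set_scope.
Unset Implicit Arguments.
Set Strict Implicit.

Theorem lemma4 (R : realType) (G : ptopologicalType)
    (mul : G -> G -> G) (inv : G -> G) (one : G)
    (mu : probability (borel_G G) R)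
    (nA nR : nat) (UA : G -> 'M[R[i]]_nA) (UR : G -> 'M[R[i]]_nR)
    (rho : 'M[R[i]]_nA) (eta : 'M[R[i]]_nR) :
  compact_group mul inv one ->
  haar mul mu ->
  cont_unitary_rep mul one UA ->
  cont_unitary_rep mul one UR ->
  is_state rho -> is_state eta ->
  Heta mu UR UA (twirl mu UR eta) rho = Heta mu UR UA eta (twirl mu UA rho) /\
  Heta mu UR UA eta (twirl mu UA rho)
    = Heta mu UR UA (twirl mu UR eta) (twirl mu UA rho) /\
  Heta mu UR UA (twirl mu UR eta) (twirl mu UA rho)
    = - log2 (opnorm (twirl mu UR eta)).
Proof.
move=> CG HA HUA HUR [pr tr] [pe te].
case: nR UR eta HUR pe te => [|n] UR eta HUR pe te.
  by move: te; rewrite /mxtrace big_ord0 => /eqP; rewrite eq_sym oner_eq0.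
have invs g : UR g *m twirl mu UR eta *m (UR g)^t* = twirl mu UR eta.
  exact: (twirl_inv CG HA eta g HUR).
have invt g : UA g *m twirl mu UA rho *m (UA g)^t* = twirl mu UA rho.
  exact: (twirl_inv CG HA rho g HUA).
have E1 := tw_l mu CG rho HUA invs.
have E2 := tw_r mu CG eta HUR invt.
have tt : twirl mu UA (twirl mu UA rho) = twirl mu UA rho := twirl_fix mu invt.
have E3 := tw_l mu CG (twirl mu UA rho) HUA invs.
rewrite tt in E3.
have H1 : Heta mu UR UA (twirl mu UR eta) rho =
    Hmin (twirl mu UR eta *t twirl mu UA rho) := congr1 (@Hmin _ _ _) E1.
have H2 : Heta mu UR UA eta (twirl mu UA rho) =
    Hmin (twirl mu UR eta *t twirl mu UA rho) := congr1 (@Hmin _ _ _) E2.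
have H3 : Heta mu UR UA (twirl mu UR eta) (twirl mu UA rho) =
    Hmin (twirl mu UR eta *t twirl mu UA rho) := congr1 (@Hmin _ _ _) E3.
rewrite H1 H2 H3; split; first reflexivity; split; first reflexivity.
apply: Hmin_tens.
- exact: (twirl_psd mu CG HUR pe).
- exact: (twirl_psd mu CG HUA pr).
- by rewrite (twirl_tr mu CG rho HUA).
Qed.
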